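(* Let $d\geq 1$. For each $k\geq 1$ let $\{B_{k\ell}:\ell\geq 1\}$ be a set of basis functions, and for each $j\in\{1,\ldots,d\}$ and $k\geq1$ let $\{B_{jkr}:r\geq 1\}$ be a set of basis functions. Let $g:\mathbb{R}\to[0,1]$ be non-constant and Lipschitz continuous. Then for any continuous function $f:[0,1]^d\to\mathbb{R}$ and any constant $\epsilon>0$, there exist integers $p\geq 1$, $q_k\geq 1$, $q_{jk}\geq 1$ ($1\le j\le d$, $1\le k\le p$) and real numbers $c_{k\ell}, c_{jkr}, b_k, b$ such that $$\sup_{\mathbf{x}=(x_1,\ldots,x_d)\in[0,1]^d}\left|f(\mathbf{x})-\left(\sum_{k=1}^p\sum_{\ell=1}^{q_k}c_{k\ell}B_{k\ell}\Big(g\Big(\sum_{j=1}^d\sum_{r=1}^{q_{jk}}c_{jkr}B_{jkr}(x_j)+b_k\Big)\Big)+b\right)\right|<\epsilon.$$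
   Context: A set $\{B_r:[0,1]\to\mathbb{R}\,|\,r\geq1\}$ of functions is called a set of basis functions if for every continuous $\phi:[0,1]\to\mathbb{R}$ and every $\epsilon>0$ there exist $q\geq1$ and $c_1,\ldots,c_q,c\in\mathbb{R}$ with $\sup_{x\in[0,1]}|\phi(x)-(\sum_{r=1}^q c_rB_r(x)+c)|<\epsilon$ (e.g. $\{x^r\}$, $\{\cos(r\pi x)\}$). *)

(* Defs.v *)
From HB Require Import structures.
From mathcomp Require Import all_boot all_order all_algebra.
From mathcomp Require Import all_classical all_reals all_analysis.
Set Implicit Arguments. Unset Strict Implicit. Unset Printing Implicit Defensive.
Import Order.TTheory GRing.Theory Num.Theory.
Import numFieldNormedType.Exports.
Local Open Scope classical_set_scope.
Local Open Scope ring_scope.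

(* "sup_{x in A} |h x| < eps" written without [sup] (which is junk for
   unbounded sets): some eps' < eps bounds |h x| uniformly on A. *)
Definition sup_lt {T : Type} {R : realType} (A : set T) (h : T -> R) (eps : R) :=
  exists2 e' : R, e' < eps & forall x, A x -> `|h x| <= e'.

Definition unit_cube {R : realType} (d : nat) : set 'rV[R]_d :=
  [set x | forall i : 'I_d, 0 <= x ord0 i <= 1].

(* {B_r : r >= 1} is a set of basis functions on [0,1]; B 0 is ignored. *)
Definition basis_functions {R : realType} (B : nat -> R -> R) : Prop :=
  forall phi : R -> R, {within `[0, 1], continuous phi} ->
  forall eps : R, 0 < eps ->
  exists q : nat, (1 <= q)%N /\
  exists (c : nat -> R) (c0 : R),
    sup_lt `[0, 1] (fun x => phi x - (\sum_(1 <= r < q.+1) c r * B r x + c0)) eps.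
Arguments unit_cube {R} d.

(* Main.v *)
Require Import Defs.
From HB Require Import structures.
From mathcomp Require Import all_boot all_order all_algebra.
From mathcomp Require Import all_classical all_reals all_analysis.
From mathcomp Require Import ring lra zify.
Import Order.TTheory GRing.Theory Num.Theory.
Import numFieldNormedType.Exports.
Local Open Scope classical_set_scope.
Local Open Scope ring_scope.

Section Lip.
Variable R : realType.

Lemma lip_const (g : R -> R) : lipschitz g ->
  exists L : R, 0 < L /\ forall a b, `|g a - g b| <= L * `|a - b|.
Proof.
move=> hg; have [M [Mr HM]] := hg.
have HL : M < Num.max M 0 + 1.
  by rewrite (@le_lt_trans _ _ (Num.max M 0)) ?ltrDl // le_max lexx.
exists (Num.max M 0 + 1); split.
  by rewrite ltr_pwDr // le_max lexx orbT.
move=> a b; exact: (HM _ HL (a, b)).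
Qed.

Lemma lip_cont (h : R -> R) (K : R) : 0 < K -> (forall a b, `|h a - h b| <= K * `|a - b|) ->
  continuous h.
Proof.
move=> K0 hK x; apply/cvgrPdist_le => e e0.
have : t @[t --> x] --> x := cvg_id.
move/cvgrPdist_lt => /(_ (e / K)) [].
  by rewrite divr_gt0.
move=> r r0 H; exists r => // t /H xt.
apply: (le_trans (hK x t)).
by rewrite -ler_pdivlMl // mulrC ltW.
Qed.
End Lip.

Section Gap.
Variable R : realType.

Lemma gap (G : R -> R) (d : nat) : continuous G -> (1 <= d)%N ->
  forall c e, c < e -> G c < G e ->
  exists z h y1, 0 < h /\ y1 < G z /\
    forall v, 1 <= v <= d%:R -> G (z - h * v) <= y1.
Proof.
move=> cG d1 c e ce Gce.
pose y2 := (G c + G e) / 2.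
pose S := [set t | c <= t <= e /\ y2 <= G t].
have Se : S e by split; [rewrite ltW // lexx | rewrite /y2; lra].
have lbS : has_lbound S by exists c => t [/andP[]].
have hinf : has_inf S by split; [exists e|].
set z := inf S.
have ze : z <= e by apply: ge_inf.
have cz : c <= z by apply: lb_le_inf; [exists e| move=> t [/andP[]]].
have below : forall t, c <= t -> t < z -> G t < y2.
  move=> t ct tz; rewrite ltNge; apply/negP => Ht.
  have : S t by split => //; rewrite ct /= (le_trans (ltW tz) ze).
  by move/(ge_inf lbS); rewrite leNgt tz.
have Gz : y2 <= G z.
  rewrite leNgt; apply/negP => Gzy.
  have := cG z; move/cvgrPdist_lt => /(_ (y2 - G z)); rewrite subr_gt0 => /(_ Gzy).
  move=> [r r0 Hr].
  have [t St tz] := inf_adherent r0 hinf.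
  have zt : z <= t by apply: ge_inf.
  have : `|z - t| < r by rewrite distrC ger0_norm ?subr_ge0 // ltrBlDl.
  move/Hr => /=; case: St => _ y2t.
  rewrite ltr_norml => /andP[H _]; lra.
have cz' : c < z.
  rewrite lt_neqAle cz andbT; apply/negP => /eqP czE.
  move: Gz; rewrite -czE /y2; lra.
pose h := (z - c) / d%:R.
have d0 : 0 < d%:R :> R by rewrite ltr0n.
have h0 : 0 < h by rewrite divr_gt0 // subr_gt0.
have hd : h * d%:R = z - c by rewrite /h mulfVK // gt_eqF.
clearbody h.
have czh : c <= z - h.
  have : h * 1 <= h * d%:R by rewrite ler_pM2l // ler1n.
  rewrite mulr1.
  rewrite hd; lra.
have cGc : {within `[c, z - h], continuous G} by apply: continuous_subspaceT.
have [m mI Hm] := EVT_max czh cGc.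
exists z, h, (G m); split => //; split.
  move: mI; rewrite in_itv /= => /andP[cm mz].
  apply: (lt_le_trans _ Gz); apply: below => //.
  lra.
move=> v /andP[v1 vd]; apply: Hm; rewrite in_itv /=; apply/andP; split.
  have : h * v <= h * d%:R by rewrite ler_pM2l.
  rewrite hd; lra.
have : h * 1 <= h * v by rewrite ler_pM2l.
rewrite mulr1; lra.
Qed.
End Gap.

Section Unif.
Variable R : realType.

Lemma cube_compact d : compact (unit_cube d : set 'rV[R]_d).
Proof.
have -> : unit_cube d = [set v : 'rV[R]_d | forall i, (`[0, 1]%classic : set R) (v ord0 i)].
  apply/seteqP; split => v /= H i; have := H i; by rewrite /= in_itv.
exact: (@rV_compact R d (fun=> `[0, 1]%classic) (fun=> @segment_compact R 0 1)).
Qed.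

Lemma unif d (f : 'rV[R]_d -> R) : {within unit_cube d, continuous f} ->
  forall e, 0 < e -> exists2 del, 0 < del & forall x y, unit_cube d x -> unit_cube d y ->
   (forall i, `|x ord0 i - y ord0 i| < del) -> `|f x - f y| <= e.
Proof.
move=> cf e e0.
have := cube_compact d; rewrite compact_near_coveringP => /(_ R (0^'+) 
  (fun del x => unit_cube d x -> forall y, unit_cube d y ->
   (forall i, `|x ord0 i - y ord0 i| < del) -> `|f x - f y| <= e) _).
move: cf; rewrite continuous_subspace_in => cf.
case.
  move=> x Kx.
  have := cf x; rewrite inE => /(_ Kx).
  move/cvgrPdist_lt => /(_ (e/2)); rewrite divr_gt0 // => /(_ isT).
  move/(nbhs_subspace_ex _ Kx) => [V /nbhs_ballP [r /= r0 Hr] UV].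
  have Hr' : forall t, ball x r t -> unit_cube d t -> `|f x - f t| < e / 2.
    move=> t xt Kt.
    have : (V `&` unit_cube d) t by split => //; apply: Hr.
    by rewrite -UV => -[].
  exists (ball x (r/2), [set del | 0 < del /\ del < r/2]).
    split; first by apply: nbhsx_ballx; rewrite divr_gt0.
    exists (r/2); first by rewrite /= divr_gt0.
    move=> t /=; rewrite sub0r normrN => + t0; rewrite gtr0_norm //.
  case=> x' del /= [xx' [del0 delr]] Kx' y Ky xy.
  have bx' : ball x r x' by apply: le_ball xx'; lra.
  have H1 := Hr' x' bx' Kx'.
  have : ball x r y.
    move: xx'; rewrite /ball /= => -[_ H]; split => // i j.
    have -> : i = ord0 by apply: val_inj; case: i => [[|k] Hk].
    have := H ord0 j; have := xy j; rewrite /ball /= => h1 h2.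
    have := ler_distD (x' ord0 j) (x ord0 j) (y ord0 j); lra.
  move=> bry; have H2 := Hr' y bry Ky.
  have := ler_distD (f x) (f x') (f y); rewrite distrC in H1; lra.
move=> eta /= eta0 Heta; exists (eta / 2); first by rewrite divr_gt0.
move=> x y Kx Ky xy; apply: (Heta (eta / 2)) => //=; last by rewrite divr_gt0.
rewrite sub0r normrN gtr0_norm ?divr_gt0 //; lra.
Qed.
End Unif.

Section Core.
Variable R : realType.

Definition clamp (u : R) : R := if u <= 0 then 0 else if 1 <= u then 1 else u.

Lemma clamp01 a : 0 <= clamp a <= 1.
Proof. rewrite /clamp; case: ifP => H1; try case: ifP => H2; apply/andP; split; lra. Qed.

Lemma clamp_mono a b : a <= b -> 0 <= clamp b - clamp a <= b - a.
Proof.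
move=> ab; rewrite /clamp.
case: ifP => Hb; case: ifP => Ha; try case: ifP => H1; try case: ifP => H2;
  apply/andP; split; lra.
Qed.

Lemma clamp_lip a b : `|clamp a - clamp b| <= `|a - b|.
Proof.
wlog ab : a b / a <= b.
  move=> W; case: (leP a b) => [/W//|/ltW ba].
  by rewrite distrC (distrC a); apply: W.
have /andP[h1 h2] := @clamp_mono a b ab.
by rewrite distrC (distrC a) !ger0_norm // subr_ge0.
Qed.

Variable n : nat.
Hypothesis n1 : (1 <= n)%N.

Definition Hh (i : nat) (t : R) : R :=
  if i == 0%N then 1 else clamp (n%:R * t - (i.-1)%:R).

Lemma Hh_lip i a b : `|Hh i a - Hh i b| <= n%:R * `|a - b|.
Proof.
rewrite /Hh; case: ifP => _; first by rewrite subrr normr0 mulr_ge0 ?ler0n.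
apply: le_trans (clamp_lip _ _) _.
rewrite opprB addrA subrK -mulrBr normrM ger0_norm ?ler0n //.
Qed.

Lemma Hh01 i t : 0 <= Hh i t <= 1.
Proof. rewrite /Hh; case: ifP => _; [lra| exact: clamp01]. Qed.

Definition upd (y : nat -> R) (j : nat) (v : R) : nat -> R :=
  fun k => if k == j then v else y k.

Definition Dm (F : (nat -> R) -> R) (j i : nat) : (nat -> R) -> R :=
  fun y => if i == 0%N then F (upd y j 0)
           else F (upd y j (i%:R / n%:R)) - F (upd y j ((i.-1)%:R / n%:R)).

Variable Lam : R -> R.

Fixpoint A (m : nat) (u : R) (F : (nat -> R) -> R) (x : nat -> R) : R :=
  match m with
  | 0%N => Lam u * F x
  | m'.+1 => \sum_(i < n.+1) A m' (u + 1 - Hh i (x m')) (Dm F m' i) x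
  end.

Hypothesis Lam0 : forall u, 1 <= u -> Lam u = 0.
Hypothesis Lam1 : forall u, `|Lam u| <= 1.

Lemma A_zero m u F x : 1 <= u -> A m u F x = 0.
Proof.
elim: m u F => [|m IH] u F u1 /=; first by rewrite Lam0 // mul0r.
apply: big1 => i _; apply: IH.
have := Hh01 i (x m); lra.
Qed.

Lemma A_sum m u (r : seq nat) (G : nat -> (nat -> R) -> R) x :
  A m u (fun y => \sum_(k <- r) G k y) x = \sum_(k <- r) A m u (G k) x.
Proof.
elim: m u G => [|m IH] u G /=; first by rewrite mulr_sumr.
rewrite exchange_big /=; apply: eq_bigr => i _.
have -> : Dm (fun y => \sum_(k <- r) G k y) m i = (fun y => \sum_(k <- r) Dm (G k) m i y).
  apply: funext => y; rewrite /Dm; case: ifP => _ //.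
  by rewrite sumrB.
exact: IH.
Qed.

Lemma Dm_tele F m M y : (1 <= M)%N ->
  \sum_(0 <= i < M) Dm F m i y = F (upd y m ((M.-1)%:R / n%:R)).
Proof.
case: M => // M _; elim: M => [|M IH].
  by rewrite big_nat1 /Dm /= mul0r.
rewrite big_nat_recr //= IH /Dm /=; lra.
Qed.


Lemma find_M_gen N (s : R) : (1 <= N)%N -> 0 <= s <= N%:R ->
  exists M, (1 <= M <= N)%N /\ (M.-1)%:R <= s <= M%:R.
Proof.
elim: N => // -[|N] IH _ hs.
  by exists 1%N; split => //=; lra.
have [sN|sN] := leP s N.+1%:R.
  have [M [HM HMs]] := IH isT (ltac:(apply/andP; split; lra)).
  by exists M; split => //; lia.
exists N.+2; split => //=.
apply/andP; split; lra.
Qed.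

Lemma n0 : 0 < n%:R :> R.
Proof. by rewrite ltr0n. Qed.

Lemma find_M (t : R) : 0 <= t <= 1 -> exists M, (1 <= M <= n)%N /\ ((M.-1)%:R / n%:R <= t <= M%:R / n%:R).
Proof.
move=> ht.
have [M [HM Hs]] := @find_M_gen n (n%:R * t) n1 ltac:(have := n0; nra).
exists M; split => //.
by rewrite !ler_pdivrMr ?ler_pdivlMr ?n0 // ![t * _]mulrC.
Qed.

Lemma Hh_lo i M t : (M.-1)%:R / n%:R <= t -> (1 <= i)%N -> (i < M)%N -> Hh i t = 1.
Proof.
move=> Mt i1 iM; rewrite /Hh; case: ifP => [/eqP|_]; first lia.
have : (i.-1)%:R + 1 <= (M.-1)%:R :> R.
  by rewrite natr1 ler_nat; lia.
move: Mt; rewrite ler_pdivrMr ?n0 // => Mt H.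
rewrite /clamp; case: ifP => H1; first nra.
case: ifP => // /negbT; rewrite -ltNge => H2; nra.
Qed.

Lemma Hh_hi i M t : t <= M%:R / n%:R -> (M < i)%N -> Hh i t = 0.
Proof.
move=> Mt iM; rewrite /Hh; case: ifP => [/eqP|_]; first lia.
have : (M%:R <= (i.-1)%:R :> R) by rewrite ler_nat; lia.
move: Mt; rewrite ler_pdivlMr ?n0 // => Mt H.
rewrite /clamp; case: ifP => // /negbT; rewrite -ltNge => H1; nra.
Qed.

Variable d : nat.
Definition cubeN (y : nat -> R) := forall j, (j < d)%N -> 0 <= y j <= 1.
Definition osc (F : (nat -> R) -> R) (w : R) := forall y z, cubeN y -> cubeN z ->
  (forall j, `|y j - z j| <= n%:R^-1) -> `|F y - F z| <= w.

Lemma cube_upd y j v : cubeN y -> 0 <= v <= 1 -> cubeN (upd y j v).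
Proof. by move=> cy hv k kd; rewrite /upd; case: ifP => _; [|apply: cy]. Qed.

Lemma grid01 i : (i <= n)%N -> 0 <= (i%:R / n%:R : R) <= 1.
Proof.
move=> ilen; apply/andP; split; first by rewrite divr_ge0 // ler0n.
by rewrite ler_pdivrMr ?n0 // mul1r ler_nat.
Qed.

Lemma osc_upd F w m v : osc F w -> 0 <= v <= 1 -> osc (fun y => F (upd y m v)) w.
Proof.
move=> oF hv y z cy cz yz; apply: oF; try exact: cube_upd.
move=> j; rewrite /upd; case: ifP => _ //; rewrite subrr normr0 invr_ge0 ler0n //.
Qed.

Lemma osc_Dm F w m i : osc F w -> (i <= n)%N -> osc (Dm F m i) (2 * w).
Proof.
move=> oF ilen y z cy cz yz; rewrite /Dm; case: ifP => _.
  have := @osc_upd F w m 0 oF ltac:(lra) _ _ cy cz yz.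
  have : 0 <= w.
    by apply: le_trans (oF y y cy cy _) => // j; rewrite subrr normr0 invr_ge0 ler0n.
  lra.
have h1 := @osc_upd F w m _ oF (grid01 i ilen) _ _ cy cz yz.
have h2 := @osc_upd F w m _ oF (grid01 i.-1 (leq_trans (leq_pred i) ilen)) _ _ cy cz yz.
set a := F _ in h1 *; set b := F _ in h1 *; set c := F _ in h2 *; set e := F _ in h2 *.
have := ler_normD (a - b) (e - c); rewrite -normrN in h2.
rewrite opprB in h2; have -> : a - c - (b - e) = (a - b) + (e - c) by ring.
lra.
Qed.


Lemma osc_ge0 F w x : osc F w -> cubeN x -> 0 <= w.
Proof.
move=> oF cx; apply: le_trans (oF x x cx cx _); first by rewrite normr_ge0.
by move=> j; rewrite subrr normr0 invr_ge0 ler0n.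
Qed.

Lemma norm4 (a b c e : R) : `|a + b + c + e| <= `|a| + `|b| + `|c| + `|e|.
Proof.
apply: (le_trans (ler_normD _ _)); rewrite lerD2r.
apply: (le_trans (ler_normD _ _)); rewrite lerD2r.
exact: ler_normD.
Qed.

Lemma A_approx m : (m <= d)%N -> forall u F w x, 0 <= u -> osc F w -> cubeN x ->
  `|A m u F x - Lam u * F x| <= ((3 ^ m)%:R - 1) * w.
Proof.
elim: m => [|m IH] md u F w x u0 oF cx.
  by rewrite /= subrr normr0 expn0 subrr mul0r.
have w0 := osc_ge0 _ _ _ oF cx.
have mlt : (m < d)%N by [].
have [M [/andP[M1 Mn] /andP[tlo thi]]] := find_M _ (cx m mlt).
rewrite /= -(big_mkord xpredT (fun i => A m (u + 1 - Hh i (x m)) (Dm F m i) x)).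
rewrite (@big_cat_nat _ _ _ M) //=; last by lia.
rewrite (@big_ltn _ _ _ M n.+1); last by lia.
rewrite (@eq_big_nat _ _ _ 0 M _ (fun i => A m u (Dm F m i) x)); last first.
  move=> i /andP[_ iM]; congr A.
  case: (posnP i) => [->|i0]; first by rewrite /Hh /= addrK.
  by rewrite (Hh_lo _ _ _ tlo) ?addrK.
rewrite (@eq_big_nat _ _ _ M.+1 n.+1 _ (fun=> 0)); last first.
  move=> i /andP[iM _]; apply: A_zero.
  by rewrite (Hh_hi _ _ _ thi iM) subr0 lerDr.
rewrite big1_eq addr0 -(A_sum m u (index_iota 0 M) (fun i => Dm F m i) x).
have -> : (fun y => \sum_(0 <= k < M) Dm F m k y) = (fun y => F (upd y m ((M.-1)%:R / n%:R))).
  by apply: funext => y; rewrite Dm_tele.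
case: M M1 Mn tlo thi => // M' _ Mn tlo thi /=.
set F' := fun y => F (upd y m (M'%:R / n%:R)).
set u' := u + 1 - Hh M'.+1 (x m).
have u'0 : 0 <= u' by have := Hh01 M'.+1 (x m); rewrite /u'; lra.
have gM' := grid01 M' (ltnW Mn).
have gM := grid01 M'.+1 Mn.
have e1 : M'.+1%:R / n%:R = M'%:R / n%:R + n%:R^-1 :> R by rewrite -natr1 mulrDl mul1r.
have h1 := IH (ltnW md) u F' w x u0 (osc_upd _ _ m _ oF gM') cx.
have h2 : `|F' x - F x| <= w.
  apply: oF => //; first exact: cube_upd.
  move=> j; rewrite /upd; case: ifP => [/eqP ->|_]; last by rewrite subrr normr0 invr_ge0 ler0n.
  rewrite ler_norml; apply/andP; split; lra.
have h3 := IH (ltnW md) u' (Dm F m M'.+1) (2 * w) x u'0 (osc_Dm _ _ m _ oF Mn) cx.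
have h4 : `|Dm F m M'.+1 x| <= w.
  rewrite /Dm /=; apply: oF; try exact: cube_upd.
  move=> j; rewrite /upd; case: ifP => _; last by rewrite subrr normr0 invr_ge0 ler0n.
  by rewrite e1 addrC addKr ger0_norm // invr_ge0 ler0n.
set P1 := A m u F' x in h1 *; set P2 := A m u' _ x in h3 *.
have -> : P1 + P2 - Lam u * F x = (P1 - Lam u * F' x) + Lam u * (F' x - F x)
   + (P2 - Lam u' * Dm F m M'.+1 x) + Lam u' * Dm F m M'.+1 x by ring.
apply: (le_trans (norm4 _ _ _ _)); rewrite !normrM.
have := Lam1 u; have := Lam1 u'; have := normr_ge0 (F' x - F x).
have := normr_ge0 (Dm F m M'.+1 x); have := normr_ge0 (Lam u); have := normr_ge0 (Lam u').
rewrite expnS natrM.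
have : 1 <= (3 ^ m)%:R :> R by rewrite ler1n expn_gt0.
nra.
Qed.


Fixpoint ilists (m : nat) : seq (seq nat) :=
  match m with
  | 0%N => [:: [::]]
  | m'.+1 => [seq i :: l | i <- iota 0 n.+1, l <- ilists m']
  end.

Fixpoint Sfun (l : seq nat) (x : nat -> R) : R :=
  match l with
  | [::] => 0
  | i :: l' => (1 - Hh i (x (size l'))) + Sfun l' x
  end.

Fixpoint Delta (l : seq nat) (F : (nat -> R) -> R) : (nat -> R) -> R :=
  match l with
  | [::] => F
  | i :: l' => Delta l' (Dm F (size l') i)
  end.

Lemma ilists_size m l : l \in ilists m -> size l = m.
Proof.
elim: m l => [|m IH] l; first by rewrite inE => /eqP ->.
by case/allpairsP => -[i l'] [_ /IH /= <- ->].
Qed.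

Lemma size_ilists m : size (ilists m) = (n.+1 ^ m)%N.
Proof.
elim: m => [|m IH] //; by rewrite /ilists -/ilists size_allpairs size_iota IH expnS.
Qed.

Lemma A_repr m u F x :
  A m u F x = \sum_(l <- ilists m) Lam (u + Sfun l x) * Delta l F x.
Proof.
elim: m u F => [|m IH] u F; first by rewrite /= big_seq1 addr0.
change (ilists m.+1) with [seq i :: l | i <- iota 0 n.+1, l <- ilists m].
change (A m.+1 u F x) with (\sum_(i < n.+1) A m (u + 1 - Hh i (x m)) (Dm F m i) x).
rewrite big_allpairs_dep -(big_mkord xpredT (fun i => A m (u + 1 - Hh i (x m)) (Dm F m i) x)).
apply: eq_bigr => i _; rewrite IH big_seq [RHS]big_seq; apply: eq_bigr => l lm.
by rewrite /= (ilists_size _ _ lm); congr (Lam _ * _); ring.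
Qed.

Lemma Delta_dep l : forall (Q : nat -> Prop) F,
  (forall y y', (forall j, Q j -> y j = y' j) -> F y = F y') ->
  forall y y', (forall j, Q j -> (size l <= j)%N -> y j = y' j) -> Delta l F y = Delta l F y'.
Proof.
elim: l => [|i l IH] Q F HF y y' Hyy /=; first by apply: HF => j Qj; apply: Hyy.
apply: (IH (fun j => Q j /\ j <> size l)).
  move=> z z' Hz; rewrite /Dm; case: ifP => _.
    by apply: HF => j Qj; rewrite /upd; case: eqP => // jn; exact: Hz.
  congr (_ - _); apply: HF => j Qj; rewrite /upd; case: eqP => // jn; exact: Hz.
move=> j [Qj jl] lj; apply: Hyy => //=; lia.
Qed.

Lemma Sfun_sum l x : Sfun l x =
  \sum_(j < size l) (1 - Hh (nth 0%N l (size l - j.+1)) (x j)).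
Proof.
elim: l => [|i l IH] /=; first by rewrite big_ord0.
rewrite big_ord_recr /= subnn /= addrC IH; congr (_ + _).
apply: eq_bigr => j _; congr (1 - Hh _ _).
rewrite subSS; have jl := ltn_ord j; by rewrite -(subnSK jl).
Qed.

End Core.


Section GapG.
Variable R : realType.

Lemma sgn_norm (s r : R) : (s = 1 \/ s = -1) -> `|s * r| = `|r|.
Proof. by case=> ->; rewrite ?mul1r ?mulN1r ?normrN. Qed.

Lemma gap_g (g : R -> R) (L : R) (d : nat) : 0 < L ->
  (forall a b, `|g a - g b| <= L * `|a - b|) -> (1 <= d)%N ->
  (exists t1 t2, g t1 != g t2) ->
  exists z h s y1, (s = 1 \/ s = -1) /\ y1 < s * g z /\
    forall v, 1 <= v <= d%:R -> s * g (z - h * v) <= y1.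
Proof.
move=> L0 HL d1 [t1 [t2 ne]].
have [c [e [ce nce]]] : exists c e, c < e /\ g c != g e.
  case: (ltgtP t1 t2) => [lt|gt|eq].
  - by exists t1, t2.
  - by exists t2, t1; rewrite eq_sym.
  - by move: ne; rewrite eq eqxx.
have key : forall s : R, (s = 1 \/ s = -1) -> s * g c < s * g e ->
  exists z h s' y1, (s' = 1 \/ s' = -1) /\ y1 < s' * g z /\
    forall v, 1 <= v <= d%:R -> s' * g (z - h * v) <= y1.
  move=> s hs lt.
  have cG : continuous (fun t => s * g t).
    by apply: (lip_cont _ _ L L0) => a b; rewrite -mulrBr sgn_norm.
  have [z [h [y1 [h0 [Hz Hv]]]]] := gap _ _ _ cG d1 _ _ ce lt.
  by exists z, h, s, y1.
rewrite neq_lt in nce; case/orP: nce => lt.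
  by apply: (key 1); [left | rewrite !mul1r].
by apply: (key (-1)); [right | rewrite !mulN1r ltrN2].
Qed.
End GapG.

Section Fin.
Variable R : realType.
Lemma frac_le1 (T : R) : 0 <= T -> T / (1 + T) <= 1.
Proof. by move=> T0; rewrite ler_pdivrMr ?mul1r ?lerDr //; lra. Qed.
Lemma fin_bound (a b c e : R) : `|a - b| <= e / 4 -> `|b - c| <= e / 4 ->
  `|a - c| <= `|a - b| + `|b - c| -> `|a - c| <= e / 2.
Proof. lra. Qed.
End Fin.

Theorem theorem1 (R : realType) (d : nat) (hd : (1 <= d)%N)
  (B1 : nat -> nat -> R -> R) (B2 : 'I_d -> nat -> nat -> R -> R)
  (hB1 : forall k : nat, (1 <= k)%N -> basis_functions (B1 k))
  (hB2 : forall (j : 'I_d) (k : nat), (1 <= k)%N -> basis_functions (B2 j k))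
  (g : R -> R) (hg01 : forall t, 0 <= g t <= 1)
  (hgnc : exists t1 t2, g t1 != g t2) (hglip : lipschitz g)
  (f : 'rV[R]_d -> R) (hf : {within unit_cube d, continuous f})
  (eps : R) (heps : 0 < eps) :
  exists p : nat, (1 <= p)%N /\
  exists (q1 : nat -> nat) (q2 : 'I_d -> nat -> nat),
    (forall k, (1 <= k <= p)%N -> (1 <= q1 k)%N) /\
    (forall j k, (1 <= k <= p)%N -> (1 <= q2 j k)%N) /\
  exists (c1 : nat -> nat -> R) (c2 : 'I_d -> nat -> nat -> R)
         (bk : nat -> R) (b : R),
    sup_lt (unit_cube d)
      (fun x => f x -
        (\sum_(1 <= k < p.+1) \sum_(1 <= l < (q1 k).+1)
            c1 k l * B1 k l
              (g (\sum_(j < d) \sum_(1 <= r < (q2 j k).+1)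
                     c2 j k r * B2 j k r (x ord0 j) + bk k))
         + b)) eps.
Proof.
have [Lg [Lg0 HLg]] := lip_const _ _ hglip.
have [z [h [s [y1 [hs [Hz Hv]]]]]] := gap_g _ _ _ _ Lg0 HLg hd hgnc.
pose D0 := s * g z - y1.
have D00 : 0 < D0 by rewrite /D0 subr_gt0.
pose phi (y : R) := clamp R ((s * y - y1) / D0).
have phi01 : forall y, 0 <= phi y <= 1 by move=> y; exact: clamp01.
have phi_lip : forall a b, `|phi a - phi b| <= D0^-1 * `|a - b|.
  move=> a b; apply: le_trans (clamp_lip _ _ _) _.
  have -> : (s * a - y1) / D0 - (s * b - y1) / D0 = (s * (a - b)) * D0^-1.
    by rewrite -mulrBl; congr (_ * _); ring.
  by rewrite normrM sgn_norm // gtr0_norm ?invr_gt0 // mulrC.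
have phiz : phi (g z) = 1.
  by rewrite /phi -/D0 mulfV ?gt_eqF // /clamp ler10 lexx.
have phi0 : forall v, 1 <= v <= d%:R -> phi (g (z - h * v)) = 0.
  move=> v hv; rewrite /phi /clamp ifT //.
  by rewrite mulr_le0_ge0 ?subr_le0 ?Hv // invr_ge0 ltW.
pose Lam (u : R) := if u <= d%:R then phi (g (z - h * u)) else 0.
have Lam0 : forall u, 1 <= u -> Lam u = 0.
  by move=> u u1; rewrite /Lam; case: ifP => // ud; apply: phi0; rewrite u1 ud.
have Lam1 : forall u, `|Lam u| <= 1.
  move=> u; rewrite /Lam; case: ifP => _; last by rewrite normr0.
  by have /andP[a b] := phi01 (g (z - h * u)); rewrite ger0_norm.
have LamO : Lam 0 = 1 by rewrite /Lam ler0n mulr0 subr0 phiz.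
pose C := (3 ^ d)%:R : R.
have C1 : 1 <= C by rewrite /C ler1n expn_gt0.
pose w := eps / (4 * C).
have w0 : 0 < w by rewrite /w divr_gt0 // mulr_gt0 //; lra.
have [du du0 Hdu] := unif _ _ _ hf w w0.
pose n := Num.Def.archi_bound (du^-1).
have ndu : du^-1 < n%:R by apply: archi_boundP; rewrite invr_ge0 ltW.
have n1 : (1 <= n)%N.
  by rewrite -(ltr0n R); apply: lt_trans ndu; rewrite invr_gt0.
have ninv : n%:R^-1 < du.
  by rewrite -[du]invrK ltf_pV2 ?posrE ?invr_gt0 ?ltr0n.
pose Fn (y : nat -> R) := f (\row_(i < d) y i).
have oF : osc R n d Fn w.
  move=> y y' cy cy' yy; apply: Hdu.
  - by move=> i; rewrite mxE; exact: cy (ltn_ord i).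
  - by move=> i; rewrite mxE; exact: cy' (ltn_ord i).
  - by move=> i; rewrite !mxE; exact: le_lt_trans (yy i) ninv.
pose y0 := fun _ : nat => (0 : R).
pose coef (l : seq nat) := Delta R n l Fn y0.
pose p := size (ilists n d).
pose L (k : nat) := nth [::] (ilists n d) k.-1.
have p1 : (1 <= p)%N by rewrite /p size_ilists expn_gt0.
have Lsize : forall k, (1 <= k <= p)%N -> size (L k) = d.
  move=> k /andP[k1 kp]; apply: (ilists_size n); apply: mem_nth.
  by rewrite -/p; lia.
pose idx (l : seq nat) (j : nat) := nth 0%N l (d - j.+1).
pose psi (k : nat) (j : 'I_d) (t : R) := h * Hh R n (idx (L k) j) t.
pose beta := z - h * d%:R.
have Hexact : forall x, unit_cube d x ->
  `|f x - \sum_(1 <= k < p.+1) coef (L k) * phi (g (\sum_(j < d) psi k j (x ord0 j) + beta))| <= eps / 4.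
  move=> x cx.
  pose yx (j : nat) := if @insub _ (fun j => (j < d)%N) 'I_d j is Some i then x ord0 i else 0.
  have yxE : forall i : 'I_d, yx i = x ord0 i by move=> i; rewrite /yx valK.
  have rowE : \row_(i < d) yx i = x by apply/rowP => i; rewrite mxE yxE.
  have cyx : cubeN R d yx.
    move=> j jd; rewrite /yx; case: insubP => [i _ _|]; first exact: cx.
    by rewrite jd.
  have HA := A_approx R n n1 Lam Lam0 Lam1 d d (leqnn d) 0 Fn w yx (lexx 0) oF cyx.
  have FnE : Fn yx = f x by rewrite /Fn rowE.
  rewrite LamO mul1r FnE A_repr in HA.
  suff -> : \sum_(1 <= k < p.+1) coef (L k) * phi (g (\sum_(j < d) psi k j (x ord0 j) + beta))
      = \sum_(l <- ilists n d) Lam (0 + Sfun R n l yx) * Delta R n l Fn yx.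
    rewrite distrC; apply: le_trans HA _.
    have -> : eps / 4 = C * w by rewrite /w; field; rewrite /C; lra.
    by rewrite ler_wpM2r ?ltW // /C; lra.
  rewrite [RHS](big_nth [::]) [LHS]big_add1 /= -/p.
  apply: eq_big_nat => i /andP[_ ip].
  set l := nth [::] (ilists n d) i.
  have li : l \in ilists n d by apply: mem_nth.
  have ls : size l = d := ilists_size _ _ _ li.
  have DE : Delta R n l Fn yx = coef l.
    apply: (Delta_dep R n n1 l (fun j => (j < d)%N)).
      move=> y y' H; rewrite /Fn; congr f; apply/rowP => i'; rewrite !mxE; exact: H _ (ltn_ord i').
    by move=> j jd; rewrite ls => dj; lia.
  have SE : Sfun R n l yx = \sum_(j < d) (1 - Hh R n (idx l j) (x ord0 j)).
    rewrite Sfun_sum; move: (ls); rewrite /idx => ls'. rewrite ls'.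
    by apply: eq_bigr => j _; rewrite yxE.
  have S0 : 0 <= Sfun R n l yx <= d%:R.
    rewrite SE; apply/andP; split.
      by apply: sumr_ge0 => j _; have /andP[_ ?] := Hh01 R n (idx l j) (x ord0 j); lra.
    have -> : d%:R = \sum_(j < d) (1 : R) by rewrite sumr_const card_ord.
    by apply: ler_sum => j _; have /andP[? _] := Hh01 R n (idx l j) (x ord0 j); lra.
  rewrite DE add0r /Lam ifT; last by case/andP: S0.
  rewrite mulrC; congr (_ * _); congr (phi (g _)).
  rewrite SE sumrB sumr_const card_ord mulrBr mulr_sumr /beta /psi /L /=.
  rewrite -/l; ring.
pose T := \sum_(1 <= k < p.+1) `|coef (L k)|.
have T0 : 0 <= T by apply: sumr_ge0 => k _.
pose K := 1 + D0^-1 * Lg * d%:R.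
have K1 : 1 <= K by rewrite /K lerDl mulr_ge0 ?ler0n // mulr_ge0 // ?invr_ge0 ltW.
pose del := eps / (4 * ((1 + T) * K)).
have del0 : 0 < del by rewrite /del divr_gt0 // mulr_gt0 // mulr_gt0 //; lra.
have cphi : {within `[0, 1], continuous phi}.
  apply: continuous_subspaceT; apply: (lip_cont _ _ D0^-1); first by rewrite invr_gt0.
  exact: phi_lip.
have Hout : forall k : nat, exists qc : nat * (nat -> R) * R, (1 <= k)%N ->
    (1 <= qc.1.1)%N /\ forall t, 0 <= t <= 1 ->
    `|phi t - (\sum_(1 <= l < qc.1.1.+1) qc.1.2 l * B1 k l t + qc.2)| < del.
  move=> k; case: (posnP k) => [->|k0]; first by exists (1%N, fun=> 0, 0).
  have [q [q1 [c [c0 [e' e'del He']]]]] := hB1 k k0 phi cphi del del0.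
  exists (q, c, c0) => _; split => // t ht; apply: le_lt_trans (He' t _) e'del.
  by rewrite /= in_itv /=.
have Hin : forall jk : 'I_d * nat, exists qc : nat * (nat -> R) * R, (1 <= jk.2)%N ->
    (1 <= qc.1.1)%N /\ forall t, 0 <= t <= 1 ->
    `|psi jk.2 jk.1 t - (\sum_(1 <= r < qc.1.1.+1) qc.1.2 r * B2 jk.1 jk.2 r t + qc.2)| < del.
  move=> [j k]; case: (posnP k) => [->|k0]; first by exists (1%N, fun=> 0, 0).
  have cpsi : {within `[0, 1], continuous (psi k j)}.
    apply: continuous_subspaceT; apply: (lip_cont _ _ (`|h| * n%:R + 1)).
      by rewrite ltr_pwDr // mulr_ge0 ?ler0n.
    move=> a b; rewrite /psi -mulrBr normrM.
    apply: (@le_trans _ _ (`|h| * (n%:R * `|a - b|))).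
      by rewrite ler_wpM2l // Hh_lip.
    by rewrite mulrA mulrDl mul1r lerDl.
  have [q [q1 [c [c0 [e' e'del He']]]]] := hB2 j k k0 (psi k j) cpsi del del0.
  exists (q, c, c0) => _; split => // t ht; apply: le_lt_trans (He' t _) e'del.
  by rewrite /= in_itv /=.
have [Ofn HO] := choice Hout.
have [Ifn HI] := choice Hin.
exists p; split => //.
exists (fun k => (Ofn k).1.1), (fun j k => (Ifn (j, k)).1.1).
split; first by move=> k /andP[k1 _]; exact: (HO k k1).1.
split; first by move=> j k /andP[k1 _]; exact: (HI (j, k) k1).1.
exists (fun k l => coef (L k) * (Ofn k).1.2 l), (fun j k r => (Ifn (j, k)).1.2 r),
  (fun k => beta + \sum_(j < d) (Ifn (j, k)).2),
  (\sum_(1 <= k < p.+1) coef (L k) * (Ofn k).2).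
exists (eps / 2); first lra.
move=> x cx.
have H1 := Hexact x cx.
pose It k := \sum_(j < d) \sum_(1 <= r < (Ifn (j, k)).1.1.+1) (Ifn (j, k)).1.2 r * B2 j k r (x ord0 j)
   + (beta + \sum_(j < d) (Ifn (j, k)).2).
pose Phi k t := \sum_(1 <= l < (Ofn k).1.1.+1) (Ofn k).1.2 l * B1 k l t + (Ofn k).2.
rewrite (_ : \sum_(1 <= k < p.+1) _ + _ = \sum_(1 <= k < p.+1) coef (L k) * Phi k (g (It k))); last first.
  rewrite -big_split /=; apply: eq_bigr => k _; rewrite /Phi mulrDr mulr_sumr; congr (_ + _).
  by apply: eq_bigr => l _; rewrite mulrA.
have key : forall k, (1 <= k <= p)%N ->
    `|phi (g (\sum_(j < d) psi k j (x ord0 j) + beta)) - Phi k (g (It k))| <= del * K.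
  move=> k /andP[k1 kp].
  have [_ HOk] := HO k k1.
  have dI : `|It k - (\sum_(j < d) psi k j (x ord0 j) + beta)| <= d%:R * del.
    have -> : It k - (\sum_(j < d) psi k j (x ord0 j) + beta) =
        \sum_(j < d) (\sum_(1 <= r < (Ifn (j, k)).1.1.+1) (Ifn (j, k)).1.2 r * B2 j k r (x ord0 j)
           + (Ifn (j, k)).2 - psi k j (x ord0 j)).
      by rewrite /It [in RHS]sumrB [in RHS]big_split /=; ring.
    apply: le_trans (ler_norm_sum _ _ _) _.
    have -> : d%:R * del = \sum_(j < d) del by rewrite sumr_const card_ord mulr_natl.
    apply: ler_sum => j _; rewrite distrC; have [_ HIj] := HI (j, k) k1.
    by apply: ltW; apply: HIj; exact: cx j.
  have h1 : `|phi (g (\sum_(j < d) psi k j (x ord0 j) + beta)) - phi (g (It k))|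
      <= D0^-1 * (Lg * (d%:R * del)).
    have D0i : 0 <= D0^-1 by rewrite invr_ge0 ltW.
    apply: (le_trans (phi_lip _ _)); rewrite ler_wpM2l //.
    apply: (le_trans (HLg _ _)); rewrite ler_wpM2l ?(ltW Lg0) // distrC //.
  have h2 := HOk _ (hg01 (It k)).
  have := ler_distD (phi (g (It k))) (phi (g (\sum_(j < d) psi k j (x ord0 j) + beta))) (Phi k (g (It k))).
  have -> : del * K = D0^-1 * (Lg * (d%:R * del)) + del by rewrite /K; ring.
  move: h2; rewrite /Phi; lra.
have H2 : `|\sum_(1 <= k < p.+1) coef (L k) * phi (g (\sum_(j < d) psi k j (x ord0 j) + beta))
    - \sum_(1 <= k < p.+1) coef (L k) * Phi k (g (It k))| <= eps / 4.
  rewrite -sumrB; apply: le_trans (ler_norm_sum _ _ _) _.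
  apply: (@le_trans _ _ (\sum_(1 <= k < p.+1) `|coef (L k)| * (del * K))).
    apply: ler_sum_nat => k hk; rewrite -mulrBr normrM ler_wpM2l //; exact: key.
  rewrite -mulr_suml -/T /del.
  have -> : T * (eps / (4 * ((1 + T) * K)) * K) = (eps / 4) * (T / (1 + T)).
    have T1 : 1 + T != 0 by rewrite gt_eqF // ltr_pwDl.
    have K0 : K != 0 by rewrite gt_eqF // (lt_le_trans ltr01 K1).
    by field; rewrite T1 K0.
  by rewrite ler_piMr ?divr_ge0 ?(ltW heps) // frac_le1.
have := ler_distD (\sum_(1 <= k < p.+1) coef (L k) * phi (g (\sum_(j < d) psi k j (x ord0 j) + beta)))
  (f x) (\sum_(1 <= k < p.+1) coef (L k) * Phi k (g (It k))).
move=> tri; exact: (fin_bound _ _ _ _ _ H1 H2 tri).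
Qed.
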